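(* Let $k>t+1$, $n>2k-t$, and let $\mathcal{S}_p$ be a maximal set of $k$-spaces in $\mathrm{PG}(n,q)$ pairwise intersecting in at least a $t$-space. Let $\psi(\mathcal{S}_p)=\min\{\dim T: T\text{ a subspace of }\mathrm{PG}(n,q),\ \dim(T\cap\alpha)\geq t\ \forall\alpha\in\mathcal{S}_p\}$ and let $\mathcal{T}$ be the set of all $\psi(\mathcal{S}_p)$-dimensional subspaces meeting every element of $\mathcal{S}_p$ in at least a $t$-space. Then: (1) $t\leq\psi(\mathcal{S}_p)\leq k$, and if $\psi(\mathcal{S}_p)=t$ then $\mathcal{S}_p$ is a $t$-pencil; (2) if $T\in\mathcal{T}$, then all $k$-spaces containing $T$ belong to $\mathcal{S}_p$; (3) any two elements of $\mathcal{T}$ intersect in at least a $t$-space.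
   Context: Dimensions are projective; ''intersect in at least a $t$-space'' means the intersection has dimension at least $t$. Maximal means no further $k$-space can be added keeping the property. A $t$-pencil is the set of all $k$-spaces through a fixed $t$-space. *)

(* Defs.v *)
From HB Require Import structures.
From mathcomp Require Import all_boot all_order all_algebra all_field.
Set Implicit Arguments. Unset Strict Implicit. Unset Printing Implicit Defensive.
Import GRing.Theory.
Local Open Scope ring_scope.

(* PG(n,q) is modelled by the vector space 'rV[F]_(n.+1) over a finite field F
   (q = #|F|).  A projective d-space is a vector subspace of (vector)
   dimension d+1.  Projective dimension of U is \dim U - 1. *)

Notation PGspace F n := {vspace 'rV[F]_(n.+1)}.

Definition is_kspace (F : finFieldType) (n k : nat) (U : PGspace F n) : Prop :=
  \dim U = k.+1.

Definition meet_t (F : finFieldType) (n t : nat) (U V : PGspace F n) : Prop :=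
  (t.+1 <= \dim (U :&: V))%N.

Definition t_intersecting (F : finFieldType) (n k t : nat)
    (S : PGspace F n -> Prop) : Prop :=
  (forall U, S U -> is_kspace k U) /\
  (forall U V, S U -> S V -> meet_t t U V).

Definition maximal_t_intersecting (F : finFieldType) (n k t : nat)
    (S : PGspace F n -> Prop) : Prop :=
  t_intersecting k t S /\
  (forall B, is_kspace k B -> ~ S B ->
     ~ t_intersecting k t (fun U => S U \/ U = B)).

Definition meets_all (F : finFieldType) (n t : nat)
    (S : PGspace F n -> Prop) (T : PGspace F n) : Prop :=
  forall A, S A -> meet_t t T A.

Definition is_psi (F : finFieldType) (n t : nat)
    (S : PGspace F n -> Prop) (p : nat) : Prop :=
  (exists T, \dim T = p.+1 /\ meets_all t S T) /\
  (forall T, meets_all t S T -> (p.+1 <= \dim T)%N).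

Definition calT (F : finFieldType) (n t : nat)
    (S : PGspace F n -> Prop) (p : nat) (T : PGspace F n) : Prop :=
  \dim T = p.+1 /\ meets_all t S T.

Definition is_t_pencil (F : finFieldType) (n k t : nat)
    (S : PGspace F n -> Prop) : Prop :=
  exists T0 : PGspace F n, \dim T0 = t.+1 /\
    (forall U, S U <-> (is_kspace k U /\ (T0 <= U)%VS)).

(* Main.v *)
Require Import Defs.
From HB Require Import structures.
From mathcomp Require Import all_boot all_order all_algebra all_field.
From mathcomp Require Import zify.
From Stdlib Require Import Classical.


Lemma dim_addl {F : finFieldType} {n : nat} (U : PGspace F n) v : v \notin U -> \dim (U + <[v]>)%VS = (\dim U).+1.
Proof.
move=> vU.
have := dimv_sum_cap U <[v]>; rewrite dim_vline.
have v0 : v != 0%R by apply: contraNneq vU => ->; rewrite mem0v.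
rewrite v0 /=.
have le1 := dimvS (addvSl U <[v]>).
have ne : \dim (U + <[v]>)%VS != \dim U.
  apply/eqP => E; move/negP: vU; apply.
  have /eqP EU : (U == U + <[v]>)%VS by rewrite eqEdim addvSl E leqnn.
  by rewrite EU; apply: (subvP (addvSr U _)); apply: memv_line.
lia.
Qed.

Lemma dimfull (F : finFieldType) (n : nat) : \dim (fullv : PGspace F n) = n.+1.
Proof. by rewrite dimvf /= dim_matrix; lia. Qed.

Lemma dim_le {F : finFieldType} {n : nat} (U : PGspace F n) : (\dim U <= n.+1)%N.
Proof. have := dimvS (subvf U); by rewrite (dimfull F n). Qed.

Lemma notfull {F : finFieldType} {n : nat} (U : PGspace F n) : (\dim U < n.+1)%N -> exists v, v \notin U.
Proof.
move=> H; apply: NNPP => N; move: H; have := dimfull F n => Ef.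
have : (fullv <= U)%VS.
  apply/subvP => x _; apply: NNPP => Hx; apply: N; exists x; exact/negP.
move/dimvS; rewrite Ef; lia.
Qed.

Lemma ext {F : finFieldType} {n : nat} (V : PGspace F n) r : forall U : PGspace F n, (\dim U + r <= n.+1)%N ->
  exists U', (U <= U')%VS /\ \dim U' = \dim U + r /\
     (minn n.+1 (\dim (U + V)%VS + r) <= \dim (U' + V)%VS)%N.
Proof.
elim: r => [|r IH] U H.
  exists U; split; first exact: subvv. split; first by rewrite addn0.
  by rewrite addn0 geq_minr.
have [v Hv] : exists v, v \notin U /\ ((\dim (U + V)%VS < n.+1)%N -> v \notin (U + V)%VS).
  have [HUV|HUV] := ltnP (\dim (U + V)%VS) n.+1.
    have [v Hv] := notfull (U + V)%VS HUV; exists v; split; last by [].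
    by apply: contra Hv; apply: (subvP (addvSl U V)).
  have [v Hv] : exists v, v \notin U by apply: (notfull U); lia.
  by exists v; split => //; lia.
case: Hv => HvU HvUV.
have d1 := @dim_addl F n U v HvU.
have [U' [s1 [s2 s3]]] := IH (U + <[v]>)%VS (ltac:(lia)).
exists U'; split; first exact: subv_trans (addvSl _ _) s1.
split; first by lia.
apply: leq_trans s3.
have [HUV|HUV] := ltnP (\dim (U + V)%VS) n.+1.
  have d2 := @dim_addl F n (U + V)%VS v (HvUV HUV).
  have -> : (U + <[v]> + V = (U + V) + <[v]>)%VS by rewrite -!addvA [(<[v]> + V)%VS]addvC.
  lia.
have : (\dim (U + V)%VS <= \dim (U + <[v]> + V)%VS)%N.
  by apply: dimvS; apply: addvS; [apply: addvSl | apply: subvv].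
have := dim_le (U + V)%VS. lia.
Qed.

Theorem mainTheorem8 (F : finFieldType) (n k t : nat)
  (S : PGspace F n -> Prop) (p : nat) :
  (t.+1 < k)%N -> (2 * k - t < n)%N ->
  maximal_t_intersecting k t S ->
  is_psi t S p ->
  [/\ ((t <= p)%N /\ (p <= k)%N /\ (p = t -> is_t_pencil k t S)),
      (forall T, calT t S p T ->
         forall B, is_kspace k B -> (T <= B)%VS -> S B)
    & (forall T1 T2, calT t S p T1 -> calT t S p T2 -> meet_t t T1 T2)].
Proof.
move=> Htk Hn [[Sk Sint] Smax] [[T0 [dT0 mT0]] Pmin].
have key : forall T, meets_all t S T -> forall B, is_kspace k B -> (T <= B)%VS -> S B.
  move=> T mT B kB TB; apply: NNPP => nSB; apply: (Smax B kB nSB); split.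
    by move=> U [/Sk//|->].
  move=> U V [SU|->] [SV|->].
  - exact: Sint.
  - rewrite /meet_t; apply: leq_trans (mT U SU) _; apply: dimvS.
    rewrite [(U :&: B)%VS]capvC; exact: capvS TB (subvv U).
  - rewrite /meet_t; apply: leq_trans (mT V SV) _; apply: dimvS.
    exact: capvS TB (subvv V).
  - rewrite /meet_t capvv kB; lia.
have [A SA] : exists A, S A.
  apply: NNPP => N.
  have [B [_ [dB _]]] := ext (0%VS : PGspace F n) k.+1 (0%VS) (ltac:(rewrite dimv0; lia)).
  rewrite dimv0 add0n in dB.
  apply: (Smax B dB).
    by move=> SB; apply: N; exists B.
  split; first by move=> U [SU|->] //; exfalso; apply: N; exists U.
  move=> U V [SU|->]; first by exfalso; apply: N; exists U.
  move=> [SV|->]; first by exfalso; apply: N; exists V.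
  rewrite /meet_t capvv dB; lia.
have mA : meets_all t S A := fun A' SA' => Sint A A' SA SA'.
have pk : (p <= k)%N by have := Pmin A mA; rewrite (Sk A SA).
have tp : (t <= p)%N.
  have := mT0 A SA; rewrite /meet_t => h; have := dimvS (capvSl T0 A); rewrite dT0; lia.
split.
- split => //; split => // ept; exists T0; split; first by rewrite dT0 ept.
  move=> U; split.
    move=> SU; split; first exact: Sk.
    have h := mT0 U SU.
    apply/capv_idPl; apply/eqP; rewrite eqEdim capvSl dT0 /= ept; exact: h.
  by move=> [kU TU]; exact: key mT0 U kU TU.
- by move=> T [_ mT] B kB TB; exact: key mT B kB TB.
- move=> T1 T2 [d1 m1] [d2 m2]; rewrite /meet_t; apply: NNPP => /negP N.
  have [B1 [s1 [e1 f1]]] := ext T2 (k - p) T1 (ltac:(rewrite d1; lia)).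
  have [B2 [s2 [e2 f2]]] := ext B1 (k - p) T2 (ltac:(rewrite d2; lia)).
  have SB1 : S B1 by apply: (key T1 m1 B1) => //; rewrite /is_kspace e1 d1; lia.
  have SB2 : S B2 by apply: (key T2 m2 B2) => //; rewrite /is_kspace e2 d2; lia.
  have := Sint B1 B2 SB1 SB2; rewrite /meet_t.
  rewrite [(B2 + B1)%VS]addvC [(T2 + B1)%VS]addvC in f2.
  have := dimv_sum_cap B1 B2; have := dimv_sum_cap T1 T2.
  rewrite d1 d2 e1 e2 d1 d2 in f1 f2 *.
  lia.
Qed.
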